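(* Let $\mathcal A$ be a set of graphs, let $\mathcal C$ be a class of connected graphs each of which is bridge-addable in $\mathcal A$, and let $R_n\in_u\mathcal A$. Then: (a) $\mathbb E[\operatorname{frag}(R_n,\mathcal C)]<2$ for each $n$ with $\mathcal A_n\ne\emptyset$; (b) for $a\in\mathbb N$, letting $\mathcal B$ be the set of graphs $G\in\mathcal A$ having a component $H\in\mathcal C$ with $a\le v(H)\le v(G)-a$, we have $\mathbb P(R_n\in\mathcal B)<2/a$ for all $n\ge 2a$ (with $\mathcal A_n\ne\emptyset$).
   Context: $\mathcal A_n$: graphs in $\mathcal A$ on vertex set $[n]$; $R_n\in_u\mathcal A$: uniform on $\mathcal A_n$. A connected graph $H$ is bridge-addable in $\mathcal A$ if whenever $G\in\mathcal A$ has a component isomorphic to $H$ and $e$ is a non-edge between that component and the rest of $G$, $G+e\in\mathcal A$. $\operatorname{Frag}(G)$ is obtained from $G$ by deleting a largest component (ties broken arbitrarily); $\operatorname{frag}(G,\mathcal C)$ is the number of vertices in the components of $\operatorname{Frag}(G)$ that are in $\mathcal C$. *)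

(* Defs.v *)
From mathcomp Require Export all_boot all_order all_algebra.
Set Implicit Arguments. Unset Strict Implicit. Unset Printing Implicit Defensive.

(* A (labelled) graph on vertex set [n] = 'I_n is given by its set of ordered
   pairs of adjacent vertices; it is a simple graph when this relation is
   irreflexive and symmetric. *)
Notation graph n := {set 'I_n * 'I_n}.

Definition is_sgraph n (G : graph n) : bool :=
  [forall x, (x, x) \notin G] && [forall x, forall y, ((x, y) \in G) == ((y, x) \in G)].

Definition gedge n (G : graph n) : rel 'I_n := fun x y => (x, y) \in G.

Definition gconnected n (G : graph n) : bool :=
  [forall x, forall y, connect (gedge G) x y].

Definition comps n (G : graph n) : {set {set 'I_n}} :=
  [set [set y | connect (gedge G) x y] | x : 'I_n].

Definition iso_comp n (G : graph n) (K : {set 'I_n}) k (H : graph k) : bool :=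
  [exists f : {ffun 'I_k -> 'I_n},
     [&& injectiveb f, f @: setT == K &
         [forall x, forall y, ((x, y) \in H) == ((f x, f y) \in G)]]].

Definition gclass := forall n, pred (graph n).

Definition comp_in (C : gclass) n (G : graph n) (K : {set 'I_n}) : bool :=
  [exists H : graph #|K|, C #|K| H && iso_comp G K H].

Definition An (A : gclass) n : {set graph n} := [set G | is_sgraph G && A n G].

Definition bridge_addable (A : gclass) k (H : graph k) : Prop :=
  forall n (G : graph n) (K : {set 'I_n}) (u v : 'I_n),
    G \in An A n -> K \in comps G -> iso_comp G K H -> u \in K -> v \notin K ->
    G :|: [set (u, v); (v, u)] \in An A n.

(* L is a tie-breaking rule selecting a largest component of each graph *)
Definition largest_selector (A : gclass) (L : forall n, graph n -> {set 'I_n}) : Prop :=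
  forall n (G : graph n), G \in An A n -> 0 < n ->
    L n G \in comps G /\ forall K, K \in comps G -> #|K| <= #|L n G|.

(* frag(G, C): vertices in components of Frag(G) (= G minus the component
   L n G) that are in C *)
Definition frag (C : gclass) (L : forall n, graph n -> {set 'I_n}) n (G : graph n) : nat :=
  \sum_(K in comps G | (K != L n G) && comp_in C G K) #|K|.

Definition inB (C : gclass) (a : nat) n (G : graph n) : bool :=
  [exists K in comps G, [&& comp_in C G K, a <= #|K| & #|K| <= n - a]].

(* Main.v *)
Require Import Defs.
From mathcomp Require Import all_boot all_order all_algebra.
From mathcomp Require Import zify.
Set Implicit Arguments. Unset Strict Implicit. Unset Printing Implicit Defensive.

Definition rem2 n (G : graph n) (u v : 'I_n) : graph n := G :\: [set (u,v); (v,u)].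
Definition symg n (G : graph n) := forall x y : 'I_n, ((x,y) \in G) = ((y,x) \in G).

Lemma sgraph_sym n (G : graph n) : is_sgraph G -> symg G.
Proof. case/andP=> _ /forallP H x y. by move: (H x) => /forallP /(_ y) /eqP. Qed.

Lemma rem2_sym n (G : graph n) u v : symg G -> symg (rem2 G u v).
Proof.
move=> sG x y; rewrite !inE sG !xpair_eqE; congr (~~ _ && _).
by case: (x == u); case: (x == v); case: (y == u); case: (y == v).
Qed.

Lemma rem2C n (G : graph n) u v : rem2 G v u = rem2 G u v.
Proof. by rewrite /rem2 setUC. Qed.

Lemma csym n (G : graph n) : symg G -> connect_sym (gedge G).
Proof. by move=> sG; apply: sym_connect_sym => x y; rewrite /gedge sG. Qed.

Lemma connect_subg n (G1 G2 : graph n) x y :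
  G1 \subset G2 -> connect (gedge G1) x y -> connect (gedge G2) x y.
Proof. move=> s; apply: connect_sub => a b e; apply: connect1; exact: (subsetP s). Qed.

Lemma split_connect n (G : graph n) a b x y : symg G ->
  connect (gedge G) x y ->
  [|| connect (gedge (rem2 G a b)) x y, connect (gedge (rem2 G a b)) x a
    | connect (gedge (rem2 G a b)) x b].
Proof.
move=> sG cxy; apply/negPn/negP; rewrite !negb_or => /and3P[nxy nxa nxb].
pose D := [set z | connect (gedge (rem2 G a b)) x z].
have cD : closed (gedge G) D.
  move=> z1 z2 e12; rewrite !inE.
  case E: ((z1,z2) \in [set (a,b); (b,a)]).
    move: E; rewrite !inE !xpair_eqE => /orP[/andP[/eqP-> /eqP->]|/andP[/eqP-> /eqP->]];
      by rewrite (negbTE nxa) (negbTE nxb).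
  have e12' : gedge (rem2 G a b) z1 z2 by rewrite /gedge /rem2 inE E.
  have e21' : gedge (rem2 G a b) z2 z1 by rewrite /gedge rem2_sym.
  by apply/idP/idP => h; apply: connect_trans h _; exact: connect1.
have := closed_connect cD cxy; rewrite !inE connect0 => /esym.
by rewrite (negbTE nxy).
Qed.
Definition bridges n (G : graph n) : {set 'I_n * 'I_n} :=
  [set p in G | ~~ connect (gedge (rem2 G p.1 p.2)) p.1 p.2].

Lemma core n (G : graph n) r t1 t2 w : symg G -> (t1,w) \in G -> (t2,w) \in G ->
  connect (gedge (rem2 G t1 w)) r t1 -> ~~ connect (gedge (rem2 G t1 w)) r w ->
  connect (gedge (rem2 G t2 w)) r t2 -> ~~ connect (gedge (rem2 G t2 w)) r w ->
  t1 = t2.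
Proof.
move=> sG e1 e2 c1 n1 c2 n2; case: (eqVneq t1 t2) => // ne; exfalso.
have ne1 : t1 != w by apply: contraNneq n1 => eq; move: c1; rewrite eq.
have ne2 : t2 != w by apply: contraNneq n2 => eq; move: c2; rewrite eq.
have e21 : (t2, w) \in rem2 G t1 w.
  by rewrite !inE !xpair_eqE e2 eqxx !andbT (negbTE ne2) eq_sym (negbTE ne).
have e12 : (t1, w) \in rem2 G t2 w.
  by rewrite !inE !xpair_eqE e1 eqxx !andbT (negbTE ne1) (negbTE ne).
have s1 : rem2 (rem2 G t2 w) t1 w \subset rem2 G t1 w by apply: setSD; apply: subsetDl.
have s2 : rem2 (rem2 G t2 w) t1 w \subset rem2 G t2 w by apply: subsetDl.
case/or3P: (split_connect t1 w (rem2_sym t2 w sG) c2) => h.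
- move/negP: n1; apply; apply: connect_trans (connect_subg s1 h) _; exact: connect1.
- move/negP: n2; apply; apply: connect_trans (connect_subg s2 h) _; exact: connect1.
- by move/negP: n2; apply; apply: connect_subg s2 h.
Qed.

Definition hd_of n (G : graph n) (p : 'I_n * 'I_n) :=
  if connect (gedge (rem2 G p.1 p.2)) (fingraph.root (gedge G) p.1) p.1 then p.2 else p.1.

Lemma bridge_spec n (G : graph n) p : symg G -> p \in bridges G ->
  exists t, [/\ (t, hd_of G p) \in G, p = (t, hd_of G p) \/ p = (hd_of G p, t),
     connect (gedge (rem2 G t (hd_of G p))) (fingraph.root (gedge G) (hd_of G p)) t &
     ~~ connect (gedge (rem2 G t (hd_of G p))) (fingraph.root (gedge G) (hd_of G p)) (hd_of G p)].
Proof.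
move=> sG; case: p => u v; rewrite inE /= => /andP[e nc].
have cs := csym sG; have csR := csym (rem2_sym u v sG).
have ruv : fingraph.root (gedge G) v = fingraph.root (gedge G) u.
  by apply/esym/(fingraph.rootP cs); apply: connect1.
rewrite /hd_of /=; case E: (connect _ _ u).
- exists u; split => //; first by left.
  + by rewrite ruv.
  + rewrite ruv; apply: contra nc => h; apply: connect_trans h; by rewrite csR.
- exists v; split => //; first by rewrite sG.
  + by right.
  + rewrite rem2C.
    have cru : connect (gedge G) (fingraph.root (gedge G) u) u by rewrite cs connect_root.
    case/or3P: (split_connect u v sG cru) => h //; by rewrite E in h.
  + by rewrite rem2C E.
Qed.

Lemma card_nonroots n (G : graph n) : symg G ->
  #|[set z | fingraph.root (gedge G) z != z]| <= n.-1.
Proof.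
case: n G => [|n] G sG; first by apply: leq_trans (max_card _) _; rewrite card_ord.
have sub : [set z | fingraph.root (gedge G) z != z] \subset [set~ fingraph.root (gedge G) ord0].
  apply/subsetP => z; rewrite !inE; apply: contra => /eqP ->.
  by rewrite root_root //; apply: csym.
by apply: leq_trans (subset_leq_card sub) _; rewrite cardsC1 card_ord.
Qed.

Lemma card_bridges n (G : graph n) : symg G -> #|bridges G| <= 2 * (n - 1).
Proof.
move=> sG.
pose rt := fingraph.root (gedge G).
pose NR := [set z | rt z != z].
have cNR : #|NR| <= n.-1 by apply: card_nonroots.
pose g p := (hd_of G p, (p.1 < p.2)%N).
have inj : {in bridges G &, injective g}.
  move=> p q bp bq [] eh el.
  have [t1 [e1 o1 c1 n1]] := bridge_spec sG bp.
  have [t2 [e2 o2 c2 n2]] := bridge_spec sG bq.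
  rewrite -eh in e2 o2 c2 n2.
  have tt := core sG e1 e2 c1 n1 c2 n2; subst t2.
  have ne : t1 != hd_of G p by apply: contraNneq n1 => eq; move: c1; rewrite eq.
  move: el; case: o1 => ->; case: o2 => -> //= el.
  + exfalso; move: el ne; case: ltngtP => // /val_inj ->; by rewrite eqxx.
  + exfalso; move: el ne; case: ltngtP => // /val_inj ->; by rewrite eqxx.
have sub : g @: bridges G \subset setX NR setT.
  apply/subsetP => _ /imsetP[p bp ->]; rewrite !inE andbT.
  have [t [_ _ _ n1]] := bridge_spec sG bp.
  rewrite /g /rt /=; apply: contra n1 => /eqP ->; exact: connect0.
rewrite -(card_in_imset inj); apply: leq_trans (subset_leq_card sub) _.
by rewrite cardsX cardsT card_bool mulnC subn1 leq_mul2l cNR orbT.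
Qed.

Lemma sum_card_swap n (X : {set graph n}) (S : graph n -> {set 'I_n * 'I_n}) :
  \sum_(G in X) #|S G| = \sum_(p : 'I_n * 'I_n) #|[set G in X | p \in S G]|.
Proof.
have E1 : forall G, #|S G| = \sum_(p : 'I_n * 'I_n) (p \in S G).
  by move=> G; rewrite -sum1_card big_mkcond /=; apply: eq_bigr => p _; case: (_ \in _).
have E2 : forall p, #|[set G in X | p \in S G]| = \sum_(G in X) (p \in S G).
  move=> p; rewrite -sum1_card big_mkcond /= [RHS]big_mkcond /=.
  by apply: eq_bigr => G _; rewrite inE; case: (G \in X); case: (p \in S G).
rewrite (eq_bigr _ (fun G _ => E1 G)) exchange_big /=.
by apply: eq_bigr => p _; rewrite E2.
Qed.

Lemma count_bound n (X : {set graph n}) (S : graph n -> {set 'I_n * 'I_n}) :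
  (forall G, G \in X -> is_sgraph G) ->
  (forall G p, G \in X -> p \in S G ->
     ~~ connect (gedge G) p.1 p.2 /\ G :|: [set p; (p.2,p.1)] \in X) ->
  \sum_(G in X) #|S G| <= 2 * (n - 1) * #|X|.
Proof.
move=> sgX hS.
rewrite sum_card_swap.
apply: (@leq_trans (\sum_(p : 'I_n * 'I_n) #|[set G in X | p \in bridges G]|)).
  apply: leq_sum => p _.
  pose f G := G :|: [set p; (p.2,p.1)].
  have nin : forall G, G \in X -> p \in S G -> (p \notin G) && ((p.2,p.1) \notin G).
    move=> G GX pS; have [nc _] := hS G p GX pS.
    have sG := sgraph_sym (sgX G GX).
    apply/andP; split; apply: contra nc => h; apply: connect1.
      by rewrite /gedge -surjective_pairing.
    by rewrite /gedge sG.
  have inj : {in [set G in X | p \in S G] &, injective f}.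
    move=> G1 G2; rewrite !inE => /andP[X1 S1] /andP[X2 S2] e.
    have /andP[a1 b1] := nin _ X1 S1; have /andP[a2 b2] := nin _ X2 S2.
    apply/setP => z; move/setP: e => /(_ z); rewrite !inE.
    case: (eqVneq z p) => [->|zp]; first by rewrite (negbTE a1) (negbTE a2).
    case: (eqVneq z (p.2,p.1)) => [->|zq]; first by rewrite (negbTE b1) (negbTE b2).
    by rewrite !orbF.
  rewrite -(card_in_imset inj); apply: subset_leq_card.
  apply/subsetP => x /imsetP[G GS ->]; move: GS; rewrite inE => /andP[GX pS].
  have [nc fX] := hS G p GX pS.
  have /andP[a b] := nin _ GX pS.
  rewrite inE fX /= /bridges inE.
  have -> : rem2 (f G) p.1 p.2 = G.
    apply/setP => z; rewrite /rem2 /f !inE.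
    case: (eqVneq z p) => [->|zp]; first by rewrite (negbTE a) -surjective_pairing eqxx.
    case: (eqVneq z (p.2,p.1)) => [->|zq]; first by rewrite (negbTE b) orbT.
    by rewrite -surjective_pairing (negbTE zp) !orbF.
  by rewrite nc andbT /f !inE eqxx orbT.
rewrite -sum_card_swap.
apply: (@leq_trans (\sum_(G in X) 2 * (n - 1))).
  by apply: leq_sum => G GX; apply: card_bridges; apply: sgraph_sym; apply: sgX.
by rewrite sum_nat_const mulnC.
Qed.

Definition comp n (G : graph n) x := [set y | connect (gedge G) x y].

Lemma comp_eq n (G : graph n) x y : symg G -> y \in comp G x -> comp G y = comp G x.
Proof.
move=> sG; rewrite inE => cxy; apply/setP => z; rewrite !inE.
apply/idP/idP => h; first exact: connect_trans cxy h.
by apply: connect_trans h; rewrite (csym sG).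
Qed.

Lemma comps_of n (G : graph n) K x : symg G -> K \in comps G -> x \in K -> K = comp G x.
Proof. by move=> sG /imsetP[y _ ->] xK; rewrite -/(comp G y) (comp_eq sG xK). Qed.

Lemma comp_in_comps n (G : graph n) x : comp G x \in comps G.
Proof. exact: imset_f. Qed.

Lemma comps_disj n (G : graph n) K1 K2 z : symg G -> K1 \in comps G -> K2 \in comps G ->
  z \in K1 -> z \in K2 -> K1 = K2.
Proof. by move=> sG k1 k2 z1 z2; rewrite (comps_of sG k1 z1) (comps_of sG k2 z2). Qed.

Lemma in_comp n (G : graph n) x y : (y \in comp G x) = connect (gedge G) x y.
Proof. by rewrite inE. Qed.

Lemma card_rows n (S : {set 'I_n * 'I_n}) :
  #|S| = \sum_(u : 'I_n) #|[set v | (u, v) \in S]|.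
Proof.
rewrite -sum1_card big_mkcond /=.
have -> : \sum_(u : 'I_n) #|[set v | (u, v) \in S]| =
          \sum_(u : 'I_n) \sum_(v : 'I_n) (if (u, v) \in S then 1 else 0).
  apply: eq_bigr => u _; rewrite -sum1_card big_mkcond /=.
  by apply: eq_bigr => v _; rewrite inE.
rewrite pair_big /=; apply: eq_bigr => p _; by rewrite -surjective_pairing.
Qed.

Lemma add_bridge (A C : gclass) n (G : graph n) K u v :
  (forall k (H : graph k), C k H -> bridge_addable A H) ->
  G \in An A n -> K \in comps G -> comp_in C G K -> u \in K -> v \notin K ->
  G :|: [set (u, v); (v, u)] \in An A n.
Proof.
move=> ba GA KG /existsP[H /andP[CH iso]] uK vK.
exact: (ba _ H CH n G K u v GA KG iso uK vK).
Qed.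

Definition fam (C : gclass) (L : forall n, graph n -> {set 'I_n}) n (G : graph n) :=
  [set K in comps G | (K != L n G) && comp_in C G K].
Definition Fset C L n (G : graph n) := cover (fam C L G).
Definition Sa C L n (G : graph n) : {set 'I_n * 'I_n} :=
  [set p | ~~ connect (gedge G) p.1 p.2 && ((p.1 \in Fset C L G) || (p.2 \in Fset C L G))].

Lemma frag_F (C : gclass) (L : forall n, graph n -> {set 'I_n}) n (G : graph n) : symg G -> frag C L G = #|Fset C L G|.
Proof.
move=> sG.
have tI : trivIset (fam C L G).
  apply/trivIsetP => K1 K2; rewrite !inE => /andP[k1 _] /andP[k2 _] ne.
  apply/pred0P => z /=; apply/negbTE/negP => /andP[z1 z2].
  by move/eqP: ne; apply; apply: comps_disj z1 z2.
rewrite /frag /Fset -(eqP tI); apply: eq_bigl => K; by rewrite inE.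
Qed.

Lemma inF (C : gclass) (L : forall n, graph n -> {set 'I_n}) n (G : graph n) z : z \in Fset C L G ->
  exists K, [/\ K \in comps G, K != L n G, comp_in C G K & z \in K].
Proof. by case/bigcupP => K; rewrite inE => /andP[KG /andP[ne ci]] zK; exists K. Qed.

Lemma Sa_ok (A C : gclass) (L : forall n, graph n -> {set 'I_n}) n (G : graph n) p :
  (forall k (H : graph k), C k H -> bridge_addable A H) ->
  G \in An A n -> p \in Sa C L G ->
  ~~ connect (gedge G) p.1 p.2 /\ G :|: [set p; (p.2, p.1)] \in An A n.
Proof.
move=> ba GA; have sG : symg G by apply: sgraph_sym; move: GA; rewrite inE => /andP[].
case: p => u v; rewrite inE /= => /andP[nc /orP[h|h]]; split => //.
- have [K [KG _ ci zK]] := inF h.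
  apply: (add_bridge ba GA KG ci zK).
  by rewrite (comps_of sG KG zK) in_comp.
- have [K [KG _ ci zK]] := inF h.
  rewrite [X in G :|: X]setUC; apply: (add_bridge ba GA KG ci zK).
  by rewrite (comps_of sG KG zK) in_comp (csym sG).
Qed.

Lemma Sa_big (A C : gclass) (L : forall n, graph n -> {set 'I_n}) n (G : graph n) : largest_selector A L ->
  G \in An A n -> (0 < n)%N -> n * #|Fset C L G| <= #|Sa C L G|.
Proof.
move=> ls GA n0; have sG : symg G by apply: sgraph_sym; move: GA; rewrite inE => /andP[].
have [LG Lmax] := ls n G GA n0.
have FL : Fset C L G \subset ~: L n G.
  apply/subsetP => z zF; have [K [KG ne _ zK]] := inF zF.
  rewrite inE; apply/negP => zL; move/negP: ne; apply; apply/eqP.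
  exact: comps_disj zK zL.
apply: (@leq_trans (\sum_(u : 'I_n) #|Fset C L G|)); first by rewrite sum_nat_const card_ord.
rewrite card_rows.
apply: leq_sum => u _.
case uF: (u \in Fset C L G).
- have [K [KG _ _ uK]] := inF uF.
  have cu : comp G u \in comps G := comp_in_comps G u.
  apply: (@leq_trans #|~: L n G|); first exact: subset_leq_card.
  apply: (@leq_trans #|~: comp G u|).
    rewrite [#|~: L n G|]cardsCs [#|~: comp G u|]cardsCs !setCK leq_sub2l //; exact: Lmax.
  apply: subset_leq_card; apply/subsetP => v; rewrite !inE uF /= andbT.
  by [].
- apply: subset_leq_card; apply/subsetP => v vF; rewrite !inE vF orbT andbT /=.
  apply/negP => cuv; case/bigcupP: vF => K KF vK.
  move/negP: uF; apply; apply/bigcupP; exists K => //.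
  have KG : K \in comps G by move: KF; rewrite inE => /andP[].
  by rewrite (comps_of sG KG vK) in_comp (csym sG).
Qed.

Definition pickK (C : gclass) (a : nat) n (G : graph n) :=
  [pick K in comps G | comp_in C G K && (a <= #|K|) && (#|K| <= n - a)].
Definition Sb (C : gclass) a n (G : graph n) : {set 'I_n * 'I_n} :=
  if pickK C a G is Some K then [set p | (p.1 \in K) != (p.2 \in K)] else set0.

Lemma Sb_ok (A C : gclass) a n (G : graph n) p :
  (forall k (H : graph k), C k H -> bridge_addable A H) ->
  G \in An A n -> p \in Sb C a G ->
  ~~ connect (gedge G) p.1 p.2 /\ G :|: [set p; (p.2, p.1)] \in An A n.
Proof.
move=> ba GA; have sG : symg G by apply: sgraph_sym; move: GA; rewrite inE => /andP[].
rewrite /Sb /pickK; case: pickP => [K /andP[KG /andP[/andP[ci _] _]]|]; last by rewrite inE.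
case: p => u v; rewrite inE /=.
case uK: (u \in K); case vK: (v \in K) => //= _.
- split; first by rewrite -in_comp -(comps_of sG KG uK) vK.
  by apply: (add_bridge ba GA KG ci uK); rewrite vK.
- split.
    by rewrite (csym sG) -in_comp -(comps_of sG KG vK) uK.
  by rewrite [X in G :|: X]setUC; apply: (add_bridge ba GA KG ci vK); rewrite uK.
Qed.

Lemma Sb_big (C : gclass) a n (G : graph n) : inB C a G -> (2 * a <= n)%N ->
  a * n <= #|Sb C a G|.
Proof.
move=> iB na; rewrite /Sb /pickK; case: pickP => [K /andP[KG /andP[/andP[ci ak] kn]]|none]; last first.
  by case/exists_inP: iB => K KG /and3P[h1 h2 h3]; move: (none K); rewrite KG h1 h2 h3.
rewrite card_rows.
have -> : \sum_(u : 'I_n) #|[set v | (u, v) \in [set p | (p.1 \in K) != (p.2 \in K)]]|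
         = \sum_(u : 'I_n) (if u \in K then #|~: K| else #|K|).
  apply: eq_bigr => u _; case uK: (u \in K); apply: eq_card => v; rewrite !inE /= uK //.
  by case: (v \in K).
rewrite (bigID (mem K)) /=.
rewrite [X in _ <= _ + X](eq_bigl (fun i => i \in ~: K)); last by move=> i; rewrite inE.
rewrite (eq_bigr (fun _ => #|~: K|)); last by move=> u ->.
rewrite [X in _ <= _ + X](eq_bigr (fun _ => #|K|)); last by move=> u; rewrite inE => /negbTE ->.
rewrite !sum_nat_const.
have -> : #|[pred i | true && (i \in K)]| = #|K| by apply: eq_card.
have Ec : #|K| + #|~: K| = n by have h := cardsC K; rewrite card_ord in h.
move: Ec ak kn na; set k := #|K|; set c := #|~: K| => Ec ak kn na.
have [x Hx] : exists x, k = a + x by exists (k - a); lia.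
have [y Hy] : exists y, n = 2 * a + x + y by exists (n - 2 * a - x); lia.
have -> : c = a + y by lia.
rewrite Hx Hy; nia.
Qed.

Unset Implicit Arguments.
Import GRing.Theory Num.Theory.
Local Open Scope ring_scope.

Theorem lemma5p1 (A C : gclass) (L : forall n, graph n -> {set 'I_n}) :
  largest_selector A L ->
  (forall k (H : graph k), C k H -> is_sgraph H && gconnected H) ->
  (forall k (H : graph k), C k H -> bridge_addable A H) ->
  (forall n : nat, An A n != set0 ->
     (\sum_(G in An A n) ((frag C L G)%:R : rat)) / (#|An A n|%:R) < 2)
  /\
  (forall a n : nat, (0 < a)%N -> (2 * a <= n)%N -> An A n != set0 ->
     (#|[set G in An A n | inB C a G]|%:R : rat) / (#|An A n|%:R) < 2 / a%:R).
Proof.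
move=> ls hC ba.
have sgX : forall n G, G \in An A n -> is_sgraph G by move=> n G; rewrite inE => /andP[].
split.
- move=> n Xn0.
  have X0 : (0 < #|An A n|)%N by rewrite card_gt0.
  suff hs : (\sum_(G in An A n) frag C L G < 2 * #|An A n|)%N.
    rewrite -natr_sum ltr_pdivrMr ?ltr0n //.
    by rewrite -(natrM rat 2) ltr_nat.
  case: n Xn0 X0 => [|n] Xn0 X0.
    rewrite big1 ?muln_gt0 ?X0 // => G GX.
    rewrite frag_F; last by apply: sgraph_sym; apply: sgX GX.
    by apply/eqP; rewrite -leqn0; apply: leq_trans (max_card _) _; rewrite card_ord.
  have h := @count_bound n.+1 (An A n.+1) (@Sa C L n.+1) (@sgX n.+1)
     (fun G p GX pS => Sa_ok ba GX pS).
  have h2 : (n.+1 * \sum_(G in An A n.+1) frag C L G <= \sum_(G in An A n.+1) #|Sa C L G|)%N.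
    rewrite big_distrr /=; apply: leq_sum => G GX.
    rewrite frag_F; last by apply: sgraph_sym; apply: sgX GX.
    exact: Sa_big ls GX _.
  have h3 := leq_trans h2 h.
  move: h3 X0; set s := \sum_(G in _) _; set x := #|_|; rewrite subn1 /= => h3 X0.
  nia.
- move=> a n a0 na Xn0.
  have X0 : (0 < #|An A n|)%N by rewrite card_gt0.
  have n0 : (0 < n)%N by lia.
  have h := @count_bound n (An A n) (@Sb C a n) (@sgX n)
     (fun G p GX pS => Sb_ok ba GX pS).
  have h2 : (#|[set G in An A n | inB C a G]| * (a * n) <= \sum_(G in An A n) #|Sb C a G|)%N.
    rewrite -sum_nat_const.
    rewrite [X in (_ <= X)%N](bigID (fun G => inB C a G)) /=.
    apply: leq_trans (leq_addr _ _).
    rewrite (eq_bigl (fun G => (G \in An A n) && inB C a G)); last by move=> G; rewrite inE.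
    apply: leq_sum => G /andP[_ iB]; exact: Sb_big iB na.
  have h3 := leq_trans h2 h.
  suff hs : (#|[set G in An A n | inB C a G]| * a < 2 * #|An A n|)%N.
    rewrite ltr_pdivrMr ?ltr0n // mulrAC ltr_pdivlMr ?ltr0n //.
    by rewrite -(natrM rat 2) -natrM ltr_nat.
  move: h3 X0; set b := #|[set _ in _ | _]|; set x := #|An A n| => h3 X0.
  have [m Hm] : exists m, n = m.+1 by exists n.-1; lia.
  rewrite Hm subn1 /= in h3.
  nia.
Qed.
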